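(* Let $G$ be a graph of order $n$ with no isolated vertex. Then $G$ is $3$-$\gamma_{\rm tg}$-critical if and only if all of the following hold: (a) $G$ is open twin-free; (b) $G$ has no dominating vertex; (c) for every vertex $v$ of $G$ of degree at most $n-3$, there exists a vertex $u$ of degree $n-2$ that is not adjacent to $v$.
   Context: Open twin-free: no two distinct vertices have the same open neighborhood. A dominating vertex is adjacent to all other vertices. Total domination game: Dominator and Staller alternately choose vertices, each chosen vertex must be adjacent to some vertex not yet totally dominated; the game ends when no legal move exists; Dominator minimizes, Staller maximizes the number of moves; $\gamma_{\rm tg}(G)$ is the number of moves in the Dominator-start game under optimal play. $G|v$ is $G$ with $v$ declared already totally dominated, with $\gamma_{\rm tg}(G|v)$ defined analogously. $G$ is $3$-$\gamma_{\rm tg}$-critical if $\gamma_{\rm tg}(G)=3$ and $\gamma_{\rm tg}(G|v)<3$ for every vertex $v$. *)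

(* Defs.v *)
From mathcomp Require Import all_boot.
Set Implicit Arguments. Unset Strict Implicit. Unset Printing Implicit Defensive.

(* A finite simple graph: vertex type T : finType, adjacency e : rel T,
   symmetric and irreflexive (hypotheses of the theorem). *)

Section TDGame.
Variables (T : finType) (e : rel T).

Definition N (v : T) : {set T} := [set u | e v u].
Definition deg (v : T) : nat := #|N v|.

Definition no_isolated : Prop := forall v, exists u, e v u.
Definition open_twin_free : Prop := forall u v, N u = N v -> u = v.
Definition dominating (v : T) : Prop := forall u, u != v -> e v u.

(* D = set of vertices already totally dominated.  A vertex v is a legal
   move iff it is adjacent to some vertex not yet totally dominated. *)
Definition legal (D : {set T}) (v : T) : bool := ~~ (N v \subset D).

(* Number of remaining moves under optimal play, from state D, with
   [dom] = true iff Dominator is to move.  Each legal move strictly enlarges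
   D, so fuel #|T| suffices for the game to end. *)
Fixpoint tgval (fuel : nat) (dom : bool) (D : {set T}) : nat :=
  match fuel with
  | 0 => 0
  | k.+1 =>
    if [exists v, legal D v] then
      (if dom then
         \big[minn/#|T|]_(v | legal D v) tgval k false (D :|: N v)
       else
         \max_(v | legal D v) tgval k true (D :|: N v)).+1
    else 0
  end.

Definition gamma_tg : nat := tgval #|T| true set0.
(* gamma_tg(G|v): Dominator-start game with v declared totally dominated *)
Definition gamma_tg_at (v : T) : nat := tgval #|T| true [set v].

Definition tg_critical3 : Prop :=
  gamma_tg = 3 /\ forall v, gamma_tg_at v < 3.

End TDGame.

(* Main.v *)
Require Import Defs.
From mathcomp Require Import all_boot.
From mathcomp Require Import zify.
Set Implicit Arguments. Unset Strict Implicit. Unset Printing Implicit Defensive.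

Lemma bigmin_le (I : eqType) (r : seq I) (P : pred I) (F : I -> nat) x v :
  v \in r -> P v -> \big[minn/x]_(i <- r | P i) F i <= F v.
Proof.
elim: r => // a r IH; rewrite inE big_cons => /orP [/eqP <- | hv] hP.
- by rewrite hP geq_minl.
- case: (P a); [exact: leq_trans (geq_minr _ _) (IH hv hP) | exact: IH].
Qed.

Section Aux.
Variables (T : finType) (e : rel T).
Hypothesis e_sym : symmetric e.
Hypothesis e_irr : irreflexive e.
Hypothesis noiso : no_isolated e.
Implicit Types D : {set T}.

Lemma inN v u : (u \in N e v) = e v u.
Proof. by rewrite inE. Qed.

Lemma legalP D v : reflect (exists u, e v u && (u \notin D)) (legal e D v).
Proof.
apply: (iffP idP).
- rewrite /legal => /subsetPn [u]; rewrite inN => h1 h2; exists u; by rewrite h1.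
- case=> u /andP [h1 h2]; apply/subsetPn; exists u => //; by rewrite inN.
Qed.

Lemma notT D : D != setT -> exists x, x \notin D.
Proof.
move=> /eqP hD.
case: (pickP (fun x => x \notin D)) => [x hx|h]; first by exists x.
case: hD; apply/setP => x; rewrite inE; exact: (negbFE (h x)).
Qed.

Lemma notT2 D a : a \notin D -> D != setT.
Proof. by move=> ha; apply/eqP => hD; rewrite hD in_setT in ha. Qed.

Lemma legal_ex D : D != setT -> exists v, legal e D v.
Proof.
move=> /notT [x hx]; have [y hy] := noiso x.
exists y; apply/legalP; exists x; by rewrite e_sym hy hx.
Qed.

Lemma tg_unfold k b D : tgval e k.+1 b D =
  if [exists v, legal e D v] then
    (if b then \big[minn/#|T|]_(v | legal e D v) tgval e k false (D :|: N e v)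
     else \max_(v | legal e D v) tgval e k true (D :|: N e v)).+1
  else 0.
Proof. by []. Qed.

Lemma tg_unfold_d k D : tgval e k.+1 true D =
  if [exists v, legal e D v] then
    (\big[minn/#|T|]_(v | legal e D v) tgval e k false (D :|: N e v)).+1
  else 0.
Proof. by []. Qed.

Lemma tg_unfold_s k D : tgval e k.+1 false D =
  if [exists v, legal e D v] then
    (\max_(v | legal e D v) tgval e k true (D :|: N e v)).+1
  else 0.
Proof. by []. Qed.

Lemma tg_T k b : tgval e k b setT = 0.
Proof.
case: k => [|k] //; rewrite tg_unfold; case: ifP => // /existsP [v].
by rewrite /legal subsetT.
Qed.

Lemma U_dom k D v : legal e D v ->
  tgval e k.+1 true D <= (tgval e k false (D :|: N e v)).+1.
Proof.
move=> hv; rewrite tg_unfold_d ifT; last by apply/existsP; exists v.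
rewrite ltnS; apply: bigmin_le => //; exact: mem_index_enum.
Qed.

Lemma U_st k D c : (forall w, legal e D w -> tgval e k true (D :|: N e w) <= c) ->
  tgval e k.+1 false D <= c.+1.
Proof.
move=> h; rewrite tg_unfold_s; case: ifP => // _; rewrite ltnS; apply/bigmax_leqP => w hw; exact: h.
Qed.

Lemma L_st k D w : legal e D w ->
  (tgval e k true (D :|: N e w)).+1 <= tgval e k.+1 false D.
Proof.
move=> hw; rewrite tg_unfold_s ifT; last by apply/existsP; exists w.
rewrite ltnS; exact: (@leq_bigmax_cond _ (legal e D) (fun w => tgval e k true (D :|: N e w)) w hw).
Qed.

Lemma L_dom k D c : (exists v, legal e D v) -> c <= #|T| ->
  (forall v, legal e D v -> c <= tgval e k false (D :|: N e v)) ->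
  c.+1 <= tgval e k.+1 true D.
Proof.
move=> [v hv] hc h; rewrite tg_unfold_d ifT; last by apply/existsP; exists v.
rewrite ltnS; apply: (big_ind (fun x => c <= x)) => //.
by move=> x y hx hy; rewrite leq_min hx hy.
Qed.

Lemma L_pos k b D : D != setT -> 0 < tgval e k.+1 b D.
Proof.
move=> /legal_ex [v hv]; rewrite tg_unfold ifT; last by apply/existsP; exists v.
by case: b.
Qed.

Lemma tg_le k b D : tgval e k b D <= k.
Proof.
elim: k b D => [|k IH] b D //; rewrite tg_unfold; case: ifP => // /existsP [v hv]; case: b; rewrite ltnS /=.
- apply: leq_trans (IH false (D :|: N e v)); apply: bigmin_le => //; exact: mem_index_enum.
- apply/bigmax_leqP => w _; exact: IH.
Qed.

Lemma S1 k b D : (forall a c, a \notin D -> c \notin D -> a = c) ->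
  tgval e k.+1 b D <= 1.
Proof.
move=> h.
have H : forall v, legal e D v -> D :|: N e v = setT.
  move=> v /legalP [u /andP [hu hD]]; apply/setP => x; rewrite !inE.
  case: (boolP (x \in D)) => //= hx; by rewrite (h _ _ hx hD).
case: b.
- case: (boolP [exists v, legal e D v]) => [/existsP [v hv]|hn]; last by rewrite tg_unfold (negbTE hn).
  apply: leq_trans (U_dom k hv) _; by rewrite H // tg_T.
- apply: U_st => w hw; by rewrite H // tg_T.
Qed.

Lemma cover D : open_twin_free e ->
  (forall w, legal e D w -> D :|: N e w = setT) ->
  forall m m', m \notin D -> m' \notin D -> m = m'.
Proof.
move=> tf H.
have key : forall m m' x, m \notin D -> m' \notin D -> e m x -> e m' x.
  move=> m m' x hm hm' hx.
  have hl : legal e D x by apply/legalP; exists m; rewrite e_sym hx hm.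
  have : m' \in D :|: N e x by rewrite H // in_setT.
  by rewrite !inE (negbTE hm') /= e_sym.
move=> m m' hm hm'; apply: tf; apply/setP => x; rewrite !inE.
apply/idP/idP; exact: key.
Qed.

Lemma cardC1' (v : T) : #|~: [set v]| = #|T|.-1.
Proof. have := cardsC [set v]; rewrite cards1; lia. Qed.

Lemma cardC2 (a b : T) : a != b -> #|~: [set a; b]| = #|T| - 2.
Proof. move=> hab; have := cardsC [set a; b]; rewrite cards2 hab; lia. Qed.

Lemma N_sub v : N e v \subset ~: [set v].
Proof.
apply/subsetP => x; rewrite !inE => hx; apply/eqP => hxv; move: hx; by rewrite hxv e_irr.
Qed.

Lemma deg_le v : deg e v <= #|T|.-1.
Proof. rewrite /deg -(cardC1' v); exact: subset_leq_card (N_sub v). Qed.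

Lemma deg_dom v : deg e v = #|T|.-1 -> dominating e v.
Proof.
move=> hd.
have /eqP hE : N e v == ~: [set v] by rewrite eqEcard N_sub cardC1' -hd /deg leqnn.
move=> u hu; by rewrite -inN hE !inE.
Qed.

Lemma deg2 u : deg e u = #|T| - 2 -> 2 <= #|T| ->
  exists y, y != u /\ N e u = ~: [set u; y].
Proof.
move=> hd h2.
have : ~~ (~: [set u] \subset N e u).
  apply/negP => hs; have := subset_leq_card hs; rewrite cardC1'; rewrite /deg in hd; lia.
move/subsetPn => [y]; rewrite !inE => hyu hy; exists y; split => //.
apply/eqP; rewrite eqEcard; apply/andP; split.
- apply/subsetP => x; rewrite !inE => hx; rewrite negb_or; apply/andP; split;
    apply/eqP => hx'; subst x; [by rewrite e_irr in hx | by rewrite hx in hy].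
- rewrite cardC2; last by rewrite eq_sym. rewrite /deg in hd; by rewrite hd.
Qed.

Lemma N2_deg u y : y != u -> N e u = ~: [set u; y] -> deg e u = #|T| - 2.
Proof. by move=> hyu hN; rewrite /deg hN cardC2 // eq_sym. Qed.


Lemma n2 : 0 < #|T| -> 2 <= #|T|.
Proof.
case/card_gt0P => v _; have [u hu] := noiso v.
have huv : u != v by apply/eqP => h; rewrite h e_irr in hu.
have := max_card (mem [set u; v]); by rewrite cards2 huv.
Qed.

Lemma twin u v x : N e u = N e v -> (u \in N e x) = (v \in N e x).
Proof. by move=> huv; rewrite !inN (e_sym x u) (e_sym x v) -!inN huv. Qed.

Lemma play_ok k x v c : legal e [set x] v ->
  (forall a, a \notin [set x] :|: N e v -> a = c) -> tgval e k.+2 true [set x] <= 2.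
Proof.
move=> hv h; apply: leq_trans (U_dom k.+1 hv) _; rewrite ltnS; apply: S1 => a b ha hb.
by rewrite (h _ ha) (h _ hb).
Qed.

Lemma two_up k z : legal e set0 z ->
  (forall w, legal e (N e z) w -> N e z :|: N e w = setT) -> tgval e k.+3 true set0 <= 2.
Proof.
move=> hz H; apply: leq_trans (U_dom k.+2 hz) _; rewrite set0U ltnS.
apply: U_st => w hw; by rewrite H // tg_T.
Qed.

Lemma legal0 z : legal e set0 z.
Proof. have [u hu] := noiso z; apply/legalP; exists u; by rewrite hu in_set0. Qed.


Lemma main_sec : 0 < #|T| ->
  tg_critical3 e <->
  [/\ open_twin_free e,
      ~ (exists v, dominating e v) &
      forall v, deg e v <= #|T| - 3 ->
        exists u, deg e u = #|T| - 2 /\ ~~ e u v].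
Proof.
move=> T0; have hn2 := n2 T0.
split.
- case=> h3 hlt; rewrite /gamma_tg in h3.
  have hn3 : 3 <= #|T| by have := tg_le #|T| true set0; rewrite h3.
  have [k hk] : exists k, #|T| = k.+3 by exists (#|T| - 3); lia.
  rewrite hk in h3.
  have nodom : ~ (exists v, dominating e v).
    case=> v hv.
    have : tgval e k.+3 true set0 <= 2.
      apply: leq_trans (U_dom k.+2 (legal0 v)) _; rewrite set0U ltnS; apply: S1 => a b ha hb.
      have f : forall x, x \notin N e v -> x = v.
        move=> x hx; have [//|hxv] := eqVneq x v; by rewrite inN (hv _ hxv) in hx.
      by rewrite (f _ ha) (f _ hb).
    by rewrite h3.
  have tf : open_twin_free e.
    move=> u v huv; have [//|hne] := eqVneq u v; exfalso.
    have tw : forall x, e x u = e x v by move=> x; rewrite -!inN (twin x huv).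
    have := hlt u; rewrite /gamma_tg_at hk ltnNge => /negP; apply.
    apply: (L_dom (c:=2)); first by apply: legal_ex; apply: (@notT2 _ v); rewrite inE eq_sym.
      lia.
    move=> z hz.
    have [w [hw hne']] : exists w, legal e (N e z) w /\ N e z :|: N e w != setT.
      case: (boolP [exists w, legal e (N e z) w && (N e z :|: N e w != setT)]) => [/existsP [w /andP [? ?]]|hn]; first by exists w.
      exfalso. have : tgval e k.+3 true set0 <= 2.
        apply: (@two_up k z (legal0 z)) => w hw; move/existsPn: hn => /(_ w); rewrite hw /= negbK => /eqP //.
      by rewrite h3.
    have hl : legal e ([set u] :|: N e z) w.
      move/legalP: hw => [b /andP [hb hbz]].
      have [hbu|hbu] := eqVneq b u.
      + apply/legalP; exists v.
        move: hb hbz; rewrite hbu !inE !tw => -> hz'.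
        by rewrite /= negb_or eq_sym hne hz'.
      + apply/legalP; exists b; move: hbz; rewrite !inE => hbz.
        by rewrite hb negb_or hbu hbz.
    apply: leq_trans (L_st k.+1 hl); rewrite ltnS; apply: L_pos.
    have [a ha] := notT hne'.
    have [hau|hau] := eqVneq a u.
    + apply: (@notT2 _ v). move: ha; rewrite hau !inE !negb_or -!tw => /andP [h1 h2].
      by rewrite eq_sym hne h1 h2.
    + apply: (@notT2 _ a); move: ha; by rewrite !inE !negb_or hau.
  split => // x hx.
  have hx3 := hlt x; rewrite /gamma_tg_at hk in hx3.
  have [z [hz H]] : exists z, legal e [set x] z /\ forall w, legal e ([set x] :|: N e z) w -> [set x] :|: N e z :|: N e w = setT.
    case: (boolP [exists z, legal e [set x] z && [forall w, legal e ([set x] :|: N e z) w ==> ([set x] :|: N e z :|: N e w == setT)]]).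
    + move/existsP => [z /andP [hz /forallP hw]]; exists z; split => // w hlw; apply/eqP; exact: (implyP (hw w) hlw).
    + move=> hn; exfalso; move: hx3; rewrite ltnNge => /negP; apply.
      apply: (L_dom (c:=2)); [ | lia | ].
      * apply: legal_ex. have [y hy] := noiso x. apply: (@notT2 _ y); rewrite inE; apply/eqP => hyx; by rewrite hyx e_irr in hy.
      * move=> z hz; move/existsPn: hn => /(_ z); rewrite hz /= => /forallPn [w]; rewrite negb_imply => /andP [hw hne].
        apply: leq_trans (L_st k.+1 hw); rewrite ltnS; exact: L_pos.
  have hall := cover tf H.
  have [hzx|hzx] := eqVneq z x.
  + rewrite hzx in hall; exfalso.
    have : #|~: ([set x] :|: N e x)| <= 1.
      apply/card_le1_eqP => a b; rewrite !in_setC => ha hb; exact: hall.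
    have := cardsC ([set x] :|: N e x); have := cardsU [set x] (N e x); rewrite /deg in hx; rewrite cards1.
    lia.
  + have hzD : z \notin [set x] :|: N e z by rewrite !inE negb_or hzx e_irr.
    have f : forall a, a \notin [set x] :|: N e z -> a = z by move=> a ha; exact: hall ha hzD.
    case hzx' : (e z x).
    * exfalso; apply: nodom; exists z => a haz.
      have [->|hax] := eqVneq a x; first by [].
      case: (boolP (e z a)) => // hza. have := f a; rewrite !inE negb_or hax hza => /(_ isT) hh.
      by rewrite hh eqxx in haz.
    * exists z; split; last by rewrite hzx'.
      apply: (@N2_deg z x); first by rewrite eq_sym.
      apply/setP => a; rewrite !inE.
      case: (boolP (e z a)) => hza.
      - apply/esym; rewrite negb_or; apply/andP; split; apply/eqP => h.
          by rewrite h e_irr in hza.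
        by rewrite h hzx' in hza.
      - apply/esym/negbTE; rewrite negbK. have := f a; rewrite !inE negb_or hza andbT => h.
        case: (boolP (a == x)) => [_ | hax]; first by rewrite orbT.
        by rewrite (h hax) eqxx.
- case=> tf nodom hc.
  case/card_gt0P: T0 => v0 _.
  have hn3 : 3 <= #|T|.
    rewrite ltnNge; apply/negP => hn; apply: nodom; exists v0; apply: deg_dom.
    have [u hu] := noiso v0. have : 0 < deg e v0 by apply/card_gt0P; exists u; rewrite inN.
    have := deg_le v0. lia.
  have [k hk] : exists k, #|T| = k.+3 by exists (#|T| - 3); lia.
  have hd1 : forall x, deg e x != #|T|.-1.
    move=> x; apply/eqP => h; apply: nodom; exists x; exact: deg_dom h.
  have [u hu] : exists u, deg e u = #|T| - 2.
    case: (leqP (deg e v0) (#|T| - 3)) => h.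
    - have [u [hu _]] := hc v0 h; by exists u.
    - exists v0; have := deg_le v0; have /eqP := hd1 v0; lia.
  have [y [hyu hN]] := deg2 hu hn2.
  split.
  + rewrite /gamma_tg hk; apply/eqP; rewrite eqn_leq; apply/andP; split.
    * apply: leq_trans (U_dom k.+2 (legal0 u)) _; rewrite set0U ltnS.
      apply: U_st => w hw; apply: S1 => a c ha hc'.
      move/legalP: hw => [b /andP [hwb hb]].
      move: ha hc' hb; rewrite hN !inE !negb_or !negb_and !negbK.
      move=> /andP [/orP [/eqP ha|/eqP ha] ha2] /andP [/orP [/eqP hc1|/eqP hc1] hc2] /orP [/eqP hb1|/eqP hb1].
      all: try by rewrite ha hc1.
      all: try by rewrite ha -hb1 hwb in ha2.
      all: try by rewrite hc1 -hb1 hwb in hc2.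
    * apply: (L_dom (c:=2)); [by exists u; exact: legal0 | lia |].
      move=> z _; rewrite set0U.
      case: (boolP [exists w, legal e (N e z) w && (N e z :|: N e w != setT)]).
      - move/existsP=> [w /andP [hw hne]]; apply: leq_trans (L_st k.+1 hw); rewrite ltnS; exact: L_pos.
      - move=> hn; exfalso; apply: nodom; exists z.
        have H : forall w, legal e (N e z) w -> N e z :|: N e w = setT.
          move=> w hw; move/existsPn: hn => /(_ w); rewrite hw /= negbK => /eqP //.
        have hz : z \notin N e z by rewrite inN e_irr.
        move=> a haz; case: (boolP (a \in N e z)); first by rewrite inN.
        move=> ha; have h := cover tf H ha hz; by rewrite h eqxx in haz.
  + move=> x; rewrite /gamma_tg_at hk ltnS.
    case: (leqP (deg e x) (#|T| - 3)) => hx.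
    * have [w [hw hwx]] := hc x hx.
      have [y' [hyw hNw]] := deg2 hw hn2.
      have hxw : x != w by apply/eqP => h; rewrite -h in hw; lia.
      have hxy : x = y'.
        have : x \notin N e w by rewrite inN.
        by rewrite hNw !inE negbK (negbTE hxw) /= => /eqP.
      apply: (@play_ok k.+1 x w w).
      - have [a ha] := noiso w; apply/legalP; exists a; rewrite ha inE /=; apply/eqP => h.
        by rewrite h in ha; rewrite ha in hwx.
      - move=> a; rewrite hNw !inE negb_or negbK => /andP [hax /orP [/eqP //|/eqP hay]].
        by rewrite hay -hxy eqxx in hax.
    * have hdx : deg e x = #|T| - 2 by have := deg_le x; have /eqP := hd1 x; lia.
      have [y' [hyx hNx]] := deg2 hdx hn2.
      apply: (@play_ok k.+1 x x y').
      - have [a ha] := noiso x; apply/legalP; exists a; rewrite ha inE /=; apply/eqP => h.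
        by rewrite h e_irr in ha.
      - move=> a; rewrite hNx !inE negb_or negbK => /andP [hax /orP [/eqP hh|/eqP //]].
        by rewrite hh eqxx in hax.
Qed.

End Aux.

Theorem theorem4p6 (T : finType) (e : rel T)
  (e_sym : symmetric e) (e_irr : irreflexive e)
  (T_nonempty : 0 < #|T|) (noiso : no_isolated e) :
  tg_critical3 e <->
  [/\ open_twin_free e,
      ~ (exists v, dominating e v) &
      forall v, deg e v <= #|T| - 3 ->
        exists u, deg e u = #|T| - 2 /\ ~~ e u v].
Proof. exact: (main_sec e_sym e_irr noiso T_nonempty). Qed.
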